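(* Let $G$ be a finitely generated group which is fully residually $H$, where $H$ is finitely generated. Let $X, X'$ be finite generating sets for $G$ and $Y, Y'$ finite generating sets for $H$. Then $C_{G,X}^{H,Y} \preceq C_{G,X'}^{H,Y'}$.
   Context: $G$ is fully residually $H$ if for every finite $S \subseteq G-\{1\}$ there is a homomorphism $\phi:G\to H$ with $1 \notin \phi(S)$. For a homomorphism $\phi$, $|\phi|_X^Y := \max_{x\in X}|\phi(x)|_Y$ (word length in $Y$). $C_{G,X}^{H,Y}(R) := \min\{|\phi|_X^Y : \phi:G\to H,\ 1\notin\phi(B_R(G,X)-\{1\})\}$, where $B_R(G,X)$ is the closed ball of radius $R$ about $1$ in the $X$-word metric. For $f,g:\mathbb{N}\to\mathbb{N}$, $f\preceq g$ means there is a constant $K$ with $f(R)\le Kg(KR)+K$ for all $R$. *)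

(* Defs.v *)
From Stdlib Require Import List Arith ClassicalEpsilon.
Import ListNotations.

Record group := Group {
  carrier :> Type;
  gmul : carrier -> carrier -> carrier;
  ginv : carrier -> carrier;
  gone : carrier;
  gmulA : forall x y z, gmul x (gmul y z) = gmul (gmul x y) z;
  gmul1l : forall x, gmul gone x = x;
  gmul1r : forall x, gmul x gone = x;
  gmulVl : forall x, gmul (ginv x) x = gone;
  gmulVr : forall x, gmul x (ginv x) = gone
}.

Arguments gmul {g}.
Arguments ginv {g}.
Arguments gone {g}.

Definition letter_val {G : group} (l : bool * G) : G :=
  if fst l then ginv (snd l) else snd l.

Definition eval_word {G : group} (w : list (bool * G)) : G :=
  fold_right (fun l acc => gmul (letter_val l) acc) gone w.

Definition word_over {G : group} (X : list G) (w : list (bool * G)) : Prop :=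
  forall l, In l w -> In (snd l) X.

Definition generates {G : group} (X : list G) : Prop :=
  forall g : G, exists w, word_over X w /\ eval_word w = g.

Definition is_hom {G H : group} (phi : G -> H) : Prop :=
  forall x y, phi (gmul x y) = gmul (phi x) (phi y).

(* least natural number satisfying P (classical choice; 0 if none) *)
Definition natmin (P : nat -> Prop) : nat :=
  epsilon (inhabits 0) (fun n => P n /\ forall m, P m -> n <= m).

Definition wordlen {G : group} (X : list G) (g : G) : nat :=
  natmin (fun n => exists w, word_over X w /\ length w = n /\ eval_word w = g).

Definition homnorm {G H : group} (X : list G) (Y : list H) (phi : G -> H) : nat :=
  fold_right Nat.max 0 (map (fun x => wordlen Y (phi x)) X).

Definition ball {G : group} (X : list G) (R : nat) (g : G) : Prop :=
  wordlen X g <= R.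

Definition Cfun (G : group) (X : list G) (H : group) (Y : list H) (R : nat) : nat :=
  natmin (fun n => exists phi : G -> H, is_hom phi /\ homnorm X Y phi = n /\
            (forall g, ball X R g -> g <> gone -> phi g <> gone)).

Definition fully_residually (G H : group) : Prop :=
  forall S : list G, (forall s, In s S -> s <> gone) ->
    exists phi : G -> H, is_hom phi /\ (forall s, In s S -> phi s <> gone).

Definition preceq (f g : nat -> nat) : Prop :=
  exists K, forall R, f R <= K * g (K * R) + K.

(* Main.v *)
Require Import Defs.
From Stdlib Require Import List Arith Lia Classical ClassicalEpsilon.
Import ListNotations.

Section Grp.
Variable G : group.

Lemma inv_unique (x y : G) : gmul x y = gone -> y = ginv x.
Proof.
  intro h. rewrite <- (gmul1l G y), <- (gmulVl G x), <- gmulA, h, gmul1r. reflexivity.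
Qed.

Lemma lcancel (a x y : G) : gmul a x = gmul a y -> x = y.
Proof.
  intro h. rewrite <- (gmul1l G x), <- (gmul1l G y), <- (gmulVl G a), <- !gmulA, h. reflexivity.
Qed.

Lemma ginv_mul (x y : G) : ginv (gmul x y) = gmul (ginv y) (ginv x).
Proof.
  symmetry; apply inv_unique.
  rewrite gmulA, <- (gmulA G x y), gmulVr, gmul1r, gmulVr. reflexivity.
Qed.

Lemma ginv_ginv (x : G) : ginv (ginv x) = x.
Proof. symmetry; apply inv_unique; apply gmulVl. Qed.

Lemma letter_flip (l : bool * G) :
  letter_val (negb (fst l), snd l) = ginv (letter_val l).
Proof. destruct l as [[|] a]; unfold letter_val; simpl; [symmetry; apply ginv_ginv|reflexivity]. Qed.

Lemma eval_app (w1 w2 : list (bool * G)) :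
  eval_word (w1 ++ w2) = gmul (eval_word w1) (eval_word w2).
Proof.
  induction w1 as [|l w IH]; simpl. now rewrite gmul1l.
  rewrite IH, gmulA. reflexivity.
Qed.

Definition inv_word (w : list (bool * G)) :=
  rev (map (fun l => (negb (fst l), snd l)) w).

Lemma eval_inv (w : list (bool * G)) : eval_word (inv_word w) = ginv (eval_word w).
Proof.
  unfold inv_word. induction w as [|l w IH]; simpl.
  - symmetry; symmetry; apply inv_unique; apply gmul1l.
  - rewrite eval_app, IH. simpl. rewrite gmul1r, letter_flip, ginv_mul. reflexivity.
Qed.

Lemma word_over_app (B : list G) w1 w2 :
  word_over B w1 -> word_over B w2 -> word_over B (w1 ++ w2).
Proof. intros h1 h2 l hl. apply in_app_or in hl. destruct hl; auto. Qed.

Lemma word_over_inv (B : list G) w : word_over B w -> word_over B (inv_word w).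
Proof.
  unfold inv_word. intros h l hl. apply in_rev in hl. apply in_map_iff in hl.
  destruct hl as [l0 [<- hl0]]. simpl. apply h; auto.
Qed.

Lemma subst_word (A B : list G) k :
  (forall a, In a A -> exists w, word_over B w /\ length w <= k /\ eval_word w = a) ->
  forall w, word_over A w ->
  exists v, word_over B v /\ length v <= k * length w /\ eval_word v = eval_word w.
Proof.
  intros hA w. induction w as [|l w IH]; intros hw.
  - exists []. simpl. split; [intros l hl; destruct hl|]. split; [lia|reflexivity].
  - destruct IH as [v [hv [hlv hev]]].
    { intros l' hl'. apply hw. simpl; auto. }
    destruct (hA (snd l)) as [u [hu [hlu heu]]]. { apply hw. simpl; auto. }
    exists ((if fst l then inv_word u else u) ++ v).
    split; [|split].
    + apply word_over_app; auto. destruct (fst l); auto. apply word_over_inv; auto.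
    + rewrite app_length. simpl.
      assert (length (if fst l then inv_word u else u) = length u) as ->.
      { destruct (fst l); auto. unfold inv_word. rewrite rev_length, map_length; auto. }
      nia.
    + rewrite eval_app, hev. simpl. f_equal. unfold letter_val.
      destruct (fst l); [rewrite eval_inv|]; rewrite heu; reflexivity.
Qed.

End Grp.

Arguments inv_word {G}.

Lemma hom_one (G H : group) (phi : G -> H) : is_hom phi -> phi gone = gone.
Proof.
  intro h. assert (e : gmul (phi gone) (phi gone) = gmul (phi gone) gone).
  { rewrite <- h, gmul1l, gmul1r. reflexivity. }
  apply (lcancel H (phi gone)). rewrite e. reflexivity.
Qed.

Lemma hom_inv (G H : group) (phi : G -> H) x : is_hom phi -> phi (ginv x) = ginv (phi x).
Proof.
  intro h. apply inv_unique. rewrite <- h, gmulVr. apply hom_one; auto.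
Qed.

Definition map_word {G H : group} (phi : G -> H) (w : list (bool * G)) :=
  map (fun l => (fst l, phi (snd l))) w.

Lemma eval_map (G H : group) (phi : G -> H) w : is_hom phi ->
  eval_word (map_word phi w) = phi (eval_word w).
Proof.
  intro h. induction w as [|l w IH]; simpl.
  - symmetry; apply hom_one; auto.
  - rewrite IH, h. f_equal. unfold letter_val. destruct (fst l); simpl; auto.
    symmetry; apply hom_inv; auto.
Qed.

Lemma natmin_spec (P : nat -> Prop) : (exists n, P n) ->
  P (natmin P) /\ forall m, P m -> natmin P <= m.
Proof.
  intro ex. unfold natmin. apply epsilon_spec.
  apply NNPP. intro hno.
  assert (forall n, ~ P n) as hall.
  { intro n. induction n as [n IH] using lt_wf_ind. intro hp.
    apply hno. exists n. split; auto. intros m hm.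
    destruct (le_lt_dec n m); auto. exfalso; apply (IH m); auto. }
  destruct ex as [n hn]. apply (hall n hn).
Qed.

Definition maxl {A} (f : A -> nat) (l : list A) := fold_right Nat.max 0 (map f l).

Lemma maxl_ge {A} (f : A -> nat) l x : In x l -> f x <= maxl f l.
Proof.
  induction l as [|a l IH]; simpl; intros h. destruct h.
  unfold maxl in *; simpl. destruct h as [<-|h]; [lia|]. specialize (IH h). lia.
Qed.

Lemma maxl_le {A} (f : A -> nat) l b : (forall x, In x l -> f x <= b) -> maxl f l <= b.
Proof.
  induction l as [|a l IH]; simpl; intros h. unfold maxl; simpl; lia.
  unfold maxl in *; simpl. apply Nat.max_lub; auto.
Qed.

Lemma wordlen_spec (G : group) (X : list G) g : generates X ->
  exists w, word_over X w /\ length w = wordlen X g /\ eval_word w = g.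
Proof.
  intro gen. destruct (gen g) as [w [hw he]].
  destruct (natmin_spec (fun n => exists w, word_over X w /\ length w = n /\ eval_word w = g))
    as [h _]. { exists (length w), w; auto. }
  exact h.
Qed.

Lemma wordlen_le (G : group) (X : list G) g w :
  word_over X w -> eval_word w = g -> wordlen X g <= length w.
Proof.
  intros hw he.
  destruct (natmin_spec (fun n => exists w, word_over X w /\ length w = n /\ eval_word w = g))
    as [_ h]. { exists (length w), w; auto. }
  apply h. exists w; auto.
Qed.

Fixpoint allwords {G : group} (B : list G) (n : nat) : list (list (bool * G)) :=
  match n with
  | 0 => [[]]
  | S n => flat_map (fun w => flat_map (fun b => [(false, b) :: w; (true, b) :: w]) B)
             (allwords B n)
  end.

Lemma allwords_in (G : group) (B : list G) w : word_over B w -> In w (allwords B (length w)).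
Proof.
  induction w as [|l w IH]; intros hw; simpl; auto.
  apply in_flat_map. exists w. split.
  - apply IH. intros l' hl'. apply hw. simpl; auto.
  - apply in_flat_map. exists (snd l). split. apply hw; simpl; auto.
    destruct l as [[|] b]; simpl; auto.
Qed.

Lemma filter_ex (G : group) (L : list G) :
  exists S, forall s, (In s S -> s <> gone) /\ (In s L -> s <> gone -> In s S).
Proof.
  induction L as [|a L IH].
  - exists []. intros s; simpl; tauto.
  - destruct IH as [S hS]. destruct (classic (a = gone)) as [ha|ha].
    + exists S. intros s. destruct (hS s). simpl. split; auto.
      intros [<-|h] hs; auto. congruence.
    + exists (a :: S). intros s. destruct (hS s). simpl. split.
      * intros [<-|h]; auto.
      * intros [<-|h] hs; auto.
Qed.

Lemma Cfun_exists (G H : group) (X : list G) (Y : list H) N :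
  generates X -> fully_residually G H ->
  exists phi : G -> H, is_hom phi /\ homnorm X Y phi = Cfun G X H Y N /\
    (forall g, ball X N g -> g <> gone -> phi g <> gone).
Proof.
  intros gen fr.
  destruct (filter_ex G (flat_map (fun n => map eval_word (allwords X n)) (seq 0 (S N))))
    as [S hS].
  destruct (fr S) as [phi [hphi hne]]. { intros s; apply hS. }
  destruct (natmin_spec (fun n => exists phi : G -> H, is_hom phi /\ homnorm X Y phi = n /\
            (forall g, ball X N g -> g <> gone -> phi g <> gone))) as [h _].
  { exists (homnorm X Y phi), phi. split; auto. split; auto.
    intros g hb hg. apply hne. apply hS; auto.
    destruct (wordlen_spec G X g gen) as [w [hw [hl he]]].
    apply in_flat_map. exists (length w). split.
    - apply in_seq. unfold ball in hb. lia.
    - apply in_map_iff. exists w. split; auto. apply allwords_in; auto. }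
  exact h.
Qed.

Theorem mainTheorem6 (G H : group) (X X' : list G) (Y Y' : list H) :
  generates X -> generates X' -> generates Y -> generates Y' ->
  fully_residually G H ->
  preceq (Cfun G X H Y) (Cfun G X' H Y').
Proof.
  intros gX gX' gY gY' fr.
  set (c := maxl (wordlen X') X). set (d := maxl (wordlen Y) Y').
  exists (c * d + c + 1). intro R.
  destruct (Cfun_exists G H X' Y' ((c * d + c + 1) * R) gX' fr) as [phi [hphi [hn hb]]].
  rewrite <- hn.
  assert (hXX' : forall a, In a X -> exists w, word_over X' w /\ length w <= c /\ eval_word w = a).
  { intros a ha. destruct (wordlen_spec G X' a gX') as [w [hw [hl he]]].
    exists w. split; auto. split; auto. rewrite hl. apply (maxl_ge (wordlen X')); auto. }
  assert (hbR : forall g, ball X R g -> g <> gone -> phi g <> gone).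
  { intros g hg hne. apply hb; auto. unfold ball in *.
    destruct (wordlen_spec G X g gX) as [w [hw [hl he]]].
    destruct (subst_word G X X' c hXX' w hw) as [v [hv [hlv hev]]].
    pose proof (wordlen_le G X' g v hv ltac:(congruence)). nia. }
  assert (hle : Cfun G X H Y R <= homnorm X Y phi).
  { destruct (natmin_spec (fun n => exists phi : G -> H, is_hom phi /\ homnorm X Y phi = n /\
            (forall g, ball X R g -> g <> gone -> phi g <> gone))) as [_ h].
    { exists (homnorm X Y phi), phi. auto. }
    apply h. exists phi. auto. }
  set (m := homnorm X' Y' phi).
  assert (homnorm X Y phi <= d * (c * m)).
  { unfold homnorm. apply (maxl_le (fun x => wordlen Y (phi x))). intros x hx.
    destruct (hXX' x hx) as [w [hw [hl he]]].
    assert (hA : forall a, In a (map phi X') ->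
              exists u, word_over Y' u /\ length u <= m /\ eval_word u = a).
    { intros a ha. apply in_map_iff in ha. destruct ha as [x' [<- hx']].
      destruct (wordlen_spec H Y' (phi x') gY') as [u [hu [hlu heu]]].
      exists u. split; auto. split; auto. rewrite hlu.
      apply (maxl_ge (fun x => wordlen Y' (phi x))); auto. }
    destruct (subst_word H (map phi X') Y' m hA (map_word phi w)) as [v [hv [hlv hev]]].
    { intros l hlm. unfold map_word in hlm. apply in_map_iff in hlm.
      destruct hlm as [l0 [<- hl0]]. simpl. apply in_map. apply hw; auto. }
    assert (hB : forall a, In a Y' -> exists u, word_over Y u /\ length u <= d /\ eval_word u = a).
    { intros a ha. destruct (wordlen_spec H Y a gY) as [u [hu [hlu heu]]].
      exists u. split; auto. split; auto. rewrite hlu. apply (maxl_ge (wordlen Y)); auto. }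
    destruct (subst_word H Y' Y d hB v hv) as [u [hu [hlu heu]]].
    assert (eval_word u = phi x).
    { rewrite heu, hev, eval_map; auto. congruence. }
    pose proof (wordlen_le H Y (phi x) u hu H0).
    unfold map_word in hlv. rewrite map_length in hlv.
    assert (m * length w <= m * c) by (apply Nat.mul_le_mono_l; auto).
    assert (d * length v <= d * (c * m)) by (apply Nat.mul_le_mono_l; lia). lia. }
  nia.
Qed.
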